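(* For every $n$, $\mathrm{ex}(n,(K_{2,3},C_5),K_3)=\mathcal N(K_{2,3},T_2(n))+\mathcal N(C_5,T_2(n))$.
   Context: $K_{2,3}$ is the complete bipartite graph with parts of sizes 2 and 3, $C_5$ the 5-cycle. $T_2(n)$ is the complete bipartite graph on $n$ vertices with parts of sizes $\lfloor n/2\rfloor$, $\lceil n/2\rceil$. $\mathcal N(H,G)$ is the number of subgraphs of $G$ isomorphic to $H$; $\mathrm{ex}(n,(H_1,H_2),K_3)$ is the maximum of $\mathcal N(H_1,G)+\mathcal N(H_2,G)$ over triangle-free $n$-vertex graphs $G$. *)

(* Defs.v *)
From mathcomp Require Import all_boot.
Set Implicit Arguments. Unset Strict Implicit. Unset Printing Implicit Defensive.

Definition simple_graph (V : finType) (E : rel V) : bool :=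
  [forall x, ~~ E x x] && [forall x, forall y, E x y == E y x].

Definition edges (V : finType) (E : rel V) : {set {set V}} :=
  [set [set x; y] | x in V, y in V & E x y].

Definition triangle_free (V : finType) (E : rel V) : bool :=
  ~~ [exists x, exists y, exists z, [&& E x y, E y z & E z x]].

(* Subgraphs (vertex set, edge set) of G = (V,E) isomorphic to H = (VH,EH):
   images of H under an injective vertex map whose edge image lies in E(G). *)
Definition copies (VH V : finType) (EH : rel VH) (E : rel V)
  : {set ({set V} * {set {set V}})} :=
  [set p | [exists f : {ffun VH -> V},
     [&& injectiveb f, p.1 == f @: [set: VH],
         p.2 == [set f @: e | e : {set VH} in edges EH] & p.2 \subset edges E]]].

Definition numcopies (VH V : finType) (EH : rel VH) (E : rel V) : nat :=
  #|copies EH E|.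

Definition K23_rel : rel ('I_2 + 'I_3)%type :=
  fun x y => match x, y with
             | inl _, inr _ | inr _, inl _ => true
             | _, _ => false end.

Definition C5_rel : rel 'I_5 :=
  fun i j => (val j == (val i).+1 %% 5) || (val i == (val j).+1 %% 5).

(* T_2(n): parts {i < n/2} (size floor(n/2)) and {i >= n/2} (size ceil(n/2)) *)
Definition T2_rel (n : nat) : rel 'I_n :=
  fun i j => (val i < n./2) != (val j < n./2).

Arguments T2_rel n : clear implicits.

Definition rel_of_set (n : nat) (S : {set 'I_n * 'I_n}) : rel 'I_n :=
  fun x y => (x, y) \in S.

Definition ex_K23_C5 (n : nat) : nat :=
  \max_(S : {set 'I_n * 'I_n} |
          simple_graph (rel_of_set S) && triangle_free (rel_of_set S))
     (numcopies K23_rel (rel_of_set S) + numcopies C5_rel (rel_of_set S)).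

(* Main.v *)
Require Import Defs.
From mathcomp Require Import all_boot zify.
From Stdlib Require Import ZArith Lia FunctionalExtensionality.
Set Implicit Arguments. Unset Strict Implicit. Unset Printing Implicit Defensive.

Open Scope Z_scope.
Lemma NLZ (P Q t a b : Z) : 1 <= P -> 1 <= Q -> 0 <= t -> (b = a \/ b = a + 1) ->
  P + Q + 2 + t = a + b -> a + b <> 5 ->
  P * Q * (5 * (P - 1) + 5 * (Q - 1) + 12 * t) <= 5 * (a - 1) * (b - 1) * (a + b - 4).
Proof.
intros hP hQ ht hab hN h5.
assert (hsq := Z.square_nonneg (P - Q)).
destruct (Z.eq_dec t 0) as [t0|tpos].
- subst t.
  assert (hPQ : P * Q <= (a - 1) * (b - 1)).
  { destruct hab as [hb|hb]; subst b.
    + nia.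
    + assert (P <> Q) by lia.
      assert (hpq : P - Q >= 1 \/ P - Q <= -1) by lia.
      assert ((P - Q) * (P - Q) >= 1) by (destruct hpq; nia).
      nia. }
  assert (0 <= a + b - 4) by lia.
  assert (0 <= a - 1) by lia.
  nia.
- set s := P + Q in hN *.
  set N := a + b in hN h5 *.
  assert (hN6 : 6 <= N) by lia.
  assert (h4 : 4 * (a - 1) * (b - 1) >= (N - 2) * (N - 2) - 1).
  { destruct hab as [hb|hb]; subst N b; nia. }
  assert (hK : P * Q * (5 * (P - 1) + 5 * (Q - 1) + 12 * t) = P * Q * (12 * N - 34 - 7 * s)).
  { unfold s, N in *; nia. }
  rewrite hK.
  assert (hpos : 0 <= (a - 1) * (b - 1)) by nia.
  destruct (Z_lt_le_dec (12 * N - 34 - 7 * s) 0) as [Kneg|Kpos].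
  + assert (0 <= P * Q) by nia.
    assert (0 <= 5 * (a - 1) * (b - 1) * (a + b - 4)) by nia.
    assert (P * Q * (12 * N - 34 - 7 * s) <= 0) by (apply Z.mul_nonneg_nonpos; lia).
    lia.
  + assert (h1 : 4 * (P * Q) <= s * s).
    { unfold s. assert (E1 : (P + Q) * (P + Q) = (P - Q) * (P - Q) + 4 * (P * Q)) by ring. lia. }
    assert (h2 : 4 * (P * Q * (12 * N - 34 - 7 * s)) <= s * s * (12 * N - 34 - 7 * s)).
    { assert (E2 : 4 * (P * Q * (12 * N - 34 - 7 * s)) = (4 * (P * Q)) * (12 * N - 34 - 7 * s)) by ring.
      rewrite E2. apply Z.mul_le_mono_nonneg_r; lia. }
    assert (hx : s <= N - 3) by (unfold s, N in *; lia).
    assert (h3 : s * s * (12 * N - 34 - 7 * s) <= (N - 3) * (N - 3) * (5 * N - 13)).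
    { assert (0 <= s) by (unfold s; lia).
      assert (H1 : s * s <= (N - 3) * (N - 3)) by (apply Z.mul_le_mono_nonneg; lia).
      assert (H2 : s * s <= (N - 3) * s) by (apply Z.mul_le_mono_nonneg_r; lia).
      assert (0 <= (N - 3 - s) * (5 * (N - 3) * (N - 3) + 5 * (N - 3) * s - 7 * s * s + 2 * (N - 3) + 2 * s)).
      { apply Z.mul_nonneg_nonneg; lia. }
      assert (Eid : (N - 3) * (N - 3) * (5 * N - 13) - s * s * (12 * N - 34 - 7 * s) =
         (N - 3 - s) * (5 * (N - 3) * (N - 3) + 5 * (N - 3) * s - 7 * s * s + 2 * (N - 3) + 2 * s)) by ring.
      lia. }
    destruct (Z.eq_dec N 6) as [N6|N7].
    * assert (a = 3 /\ b = 3) as [ea eb] by (unfold N in *; destruct hab; lia).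
      rewrite ea eb. rewrite N6 in h2 h3. lia.
    * assert (h5' : (N - 3) * (N - 3) * (5 * N - 13) <= 5 * (N - 4) * ((N - 2) * (N - 2) - 1)).
      { assert (Eid : 5 * (N - 4) * ((N - 2) * (N - 2) - 1) - (N - 3) * (N - 3) * (5 * N - 13) = (N - 3) * (3 * N - 19)) by ring.
        assert (0 <= (N - 3) * (3 * N - 19)) by (apply Z.mul_nonneg_nonneg; lia).
        lia. }
      assert (h6 : 5 * (N - 4) * ((N - 2) * (N - 2) - 1) <= 5 * (N - 4) * (4 * (a - 1) * (b - 1))).
      { apply Z.mul_le_mono_nonneg_l; lia. }
      assert (E3 : 5 * (N - 4) * (4 * (a - 1) * (b - 1)) = 4 * (5 * (a - 1) * (b - 1) * (a + b - 4))) by (unfold N; ring).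
      lia.
Qed.

Lemma NLZ5 (P Q t : Z) : 1 <= P -> 1 <= Q -> 0 <= t -> P + Q + 2 + t = 5 ->
  P * Q * (5 * (P - 1) + 5 * (Q - 1) + 12 * t) <= 12.
Proof.
intros hP hQ ht hN.
assert (P = 1 \/ P = 2) as [->| ->] by lia; assert (Q = 1 \/ Q = 2) as [->| ->] by lia;
  assert (t = 0 \/ t = 1) as [->| ->] by lia; lia.
Qed.
Close Scope Z_scope.


Definition Bn N := if N == 5 then 12 else 5 * ((N./2).-1 * (N - N./2).-1 * (N - 4)).

Lemma NL N p q t : p + q + t = N -> 0 < p -> 0 < q ->
 5 * (p.-1 * p.-2 * q.-1) + 6 * (t * (p.-1 * q.-1)) +
 (5 * (q.-1 * q.-2 * p.-1) + 6 * (t * (q.-1 * p.-1))) <= Bn N.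
Proof.
move=> hN hp hq.
have [p1|p2] := leqP p 1.
  have -> : p.-1 = 0 by lia.
  rewrite !mul0n !muln0; exact: leq0n.
have [q1|q2] := leqP q 1.
  have -> : q.-1 = 0 by lia.
  rewrite !mul0n !muln0; exact: leq0n.
have [P eP] : exists P, p = P.+2 by exists p.-2; lia.
have [Q eQ] : exists Q, q = Q.+2 by exists q.-2; lia.
subst p q => /=.
have [o [hao hNo]] : exists o, o <= 1 /\ o + (N./2).*2 = N.
  by exists (odd N); split; [case: (odd N) | exact: odd_double_half].
set a := N./2 in hNo.
have [A eA] : exists A, a = A.+2 by exists a.-2; rewrite -!subn1 -subnDA; lia.
have e1 : (N./2).-1 = A.+1 by rewrite -/a eA.
have e2 : (N - N./2).-1 = A.+1 + o by rewrite -/a; lia.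
have e3 : N - 4 = P + Q + t by lia.
rewrite /Bn e1 e2 e3.
case: eqP => [N5|nN5].
  have := @NLZ5 (Z.of_nat P.+1) (Z.of_nat Q.+1) (Z.of_nat t).
  lia.
have := @NLZ (Z.of_nat P.+1) (Z.of_nat Q.+1) (Z.of_nat t) (Z.of_nat A.+2) (Z.of_nat (A.+2 + o)).
have [o0|o1] : o = 0 \/ o = 1 by lia.
  subst o; lia.
subst o; lia.
Qed.

Section Copies.
Variables (VH V : finType) (EH : rel VH) (E : rel V).

Definition Emb : {set {ffun VH -> V}} :=
  [set f : {ffun VH -> V} | injectiveb f && [forall x, forall y, EH x y ==> E (f x) (f y)]].

Definition piF (f : {ffun VH -> V}) : {set V} * {set {set V}} :=
  (f @: [set: VH], [set f @: e | e : {set VH} in edges EH]).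

Lemma imset_pair (T U : finType) (f : T -> U) x y : f @: [set x; y] = [set f x; f y].
Proof. by rewrite imsetU1 imset_set1. Qed.

Lemma edgesP (W : finType) (R : rel W) e :
  reflect (exists x y, R x y /\ e = [set x; y]) (e \in edges R).
Proof.
apply: (iffP imset2P) => [[x y _] | [x [y [Rxy ->]]]].
  by rewrite inE /= => Rxy ->; exists x, y.
by exists x y => //; rewrite inE.
Qed.

Lemma piF_copies f : f \in Emb -> piF f \in copies EH E.
Proof.
rewrite inE => /andP [injf /forallP Hf].
rewrite inE; apply/existsP; exists f; rewrite injf !eqxx /=.
apply/subsetP => e' /imsetP [e /edgesP [x [y [Exy ->]]] ->].
rewrite imset_pair; apply/edgesP; exists (f x), (f y); split => //.
by move/forallP: (Hf x) => /(_ y) /implyP; apply.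
Qed.

Hypothesis Esym : symmetric E.
Hypothesis Eirr : irreflexive E.

Lemma copies_fiber p : p \in copies EH E -> exists2 f, f \in Emb & piF f = p.
Proof.
rewrite inE => /existsP [f /and4P [injf /eqP p1 /eqP p2 sub]].
exists f; last by case: p p1 p2 sub => a b /= -> ->.
rewrite inE injf /=; apply/forallP => x; apply/forallP => y; apply/implyP => EHxy.
have : [set f x; f y] \in edges E.
  apply: (subsetP sub); rewrite p2 -imset_pair; apply: imset_f.
  by apply/edgesP; exists x, y.
move/edgesP => [a [b [Eab Hs]]].
have ha : f x \in [set a; b] by rewrite -Hs !inE eqxx.
have hb : f y \in [set a; b] by rewrite -Hs !inE eqxx orbT.
have hA : a \in [set f x; f y] by rewrite Hs !inE eqxx.
have hB : b \in [set f x; f y] by rewrite Hs !inE eqxx orbT.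
have fxy : f x != f y.
  apply/negP => /eqP exy; move: hA hB; rewrite exy setUid !inE => /eqP ea /eqP eb.
  by move: Eab; rewrite ea eb Eirr.
move/set2P: ha => [] ha; move/set2P: hb => [] hb; rewrite ha hb //.
- by move: fxy; rewrite ha hb eqxx.
- by rewrite Esym.
- by move: fxy; rewrite ha hb eqxx.
Qed.

Lemma imsetT_inj (T : finType) (s : T -> T) : injective s -> s @: [set: T] = [set: T].
Proof.
move=> injs; apply/eqP; rewrite eqEcard subsetT /= card_imset //.
Qed.

Lemma edges_aut (s : VH -> VH) : injective s -> (forall x y, EH (s x) (s y) = EH x y) ->
  [set s @: e | e : {set VH} in edges EH] = edges EH.
Proof.
move=> injs Hs; apply/eqP; rewrite eqEcard card_imset ?leqnn ?andbT; last exact: imset_inj.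
apply/subsetP => e' /imsetP [e /edgesP [x [y [Exy ->]]] ->].
by rewrite imset_pair; apply/edgesP; exists (s x), (s y); rewrite Hs.
Qed.

Lemma copies_aut (A : {set {ffun VH -> VH}}) :
  (forall s, s \in A -> injective s /\ forall x y, EH (s x) (s y) = EH x y) ->
  #|copies EH E| * #|A| <= #|Emb|.
Proof.
move=> HA.
rewrite -[#|Emb|]sum1_card (partition_big piF (mem (copies EH E))); last first.
  by move=> f; apply: piF_copies.
rewrite -sum_nat_const; apply: leq_sum => p pC.
have [f0 f0E pf0] := copies_fiber pC.
rewrite sum1_card.
pose g (s : {ffun VH -> VH}) : {ffun VH -> V} := [ffun x => f0 (s x)].
have injf0 : injective f0 by move: f0E; rewrite inE => /andP [/injectiveP].
rewrite -(@card_in_imset _ _ g A); last first.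
  by move=> s t _ _ /ffunP Hst; apply/ffunP => x; apply: injf0; have := Hst x; rewrite !ffunE.
apply: subset_leq_card; apply/subsetP => h /imsetP [s sA ->].
have [injs Hs] := HA s sA.
have gE : g s =1 f0 \o s by move=> x; rewrite ffunE.
rewrite unfold_in; apply/andP; split.
  rewrite inE; apply/andP; split.
    by apply/injectiveP => x y; rewrite !gE /= => /injf0 /injs.
  apply/forallP => x; apply/forallP => y; apply/implyP => EHxy.
  move: f0E; rewrite inE => /andP [_ /forallP /(_ (s x)) /forallP /(_ (s y)) /implyP].
  by rewrite !gE; apply; rewrite Hs.
rewrite -pf0 /piF; apply/eqP; congr (_, _).
  by rewrite (eq_imset _ gE) imset_comp imsetT_inj.
rewrite -[in RHS](edges_aut injs Hs) -imset_comp; apply: eq_imset => e /=.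
by rewrite (eq_imset _ gE) imset_comp.
Qed.

End Copies.

Lemma card_key (T K : finType) (A : {set T}) (k : T -> K) :
  #|A| = \sum_(j : K) #|[set x in A | k x == j]|.
Proof.
rewrite -sum1_card (partition_big k predT) //; apply: eq_bigr => j _.
by rewrite -sum1_card; apply: eq_bigl => x; rewrite inE.
Qed.

Section Graph.
Variables (V : finType) (E : rel V).
Definition Nb u := [set w | E u w].
Definition cd u v := #|Nb u :&: Nb v|.
Hypothesis Esym : symmetric E.

Definition o2 (k : nat) (H : k < 2) : 'I_2 := Ordinal H.

Lemma embK23_le : #|Emb K23_rel E| <= \sum_u \sum_v (u != v) * (cd u v) ^_ 3.
Proof.
rewrite (card_key _ (fun f : {ffun _ -> V} => (f (inl ord0), f (inl ord_max)))).
rewrite pair_big /=; apply: leq_sum => [[u v]] _ /=.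
have [<-|neq] := eqVneq u v.
  rewrite mul0n leqn0 cards_eq0; apply/eqP/setP => f; rewrite !inE.
  apply/negP => /andP [/andP [/injectiveP injf _] /eqP [e1 e2]].
  by move: e2; rewrite -e1 => /injf.
rewrite mul1n.
have -> : (cd u v) ^_ 3 = #|[set g : {ffun 'I_3 -> V} in ffun_on (mem (Nb u :&: Nb v)) | injectiveb g]|.
  by rewrite card_inj_ffuns_on card_ord.
pose r (f : {ffun ('I_2 + 'I_3)%type -> V}) : {ffun 'I_3 -> V} := [ffun j => f (inr j)].
rewrite -(@card_in_imset _ _ r); last first.
  move=> f g; rewrite !inE => /andP [_ /eqP ef] /andP [_ /eqP eg] /ffunP rfg.
  apply/ffunP => [[i|j]]; last by have := rfg j; rewrite !ffunE.
  move: ef eg => [<- <-] [e1 e2].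
  case: i => [[|[|i]] Hi] //.
    by rewrite (_ : Ordinal Hi = ord0) ?e1 //; apply: val_inj.
  by rewrite (_ : Ordinal Hi = ord_max) ?e2 //; apply: val_inj.
apply: subset_leq_card; apply/subsetP => g /imsetP [f]; rewrite !inE.
move=> /andP [/andP [/injectiveP injf /forallP Hf] /eqP [eu ev]] ->.
apply/andP; split.
  apply/ffun_onP => j; rewrite ffunE !inE; apply/andP; split.
    by rewrite -eu; move: (Hf (inl ord0)) => /forallP /(_ (inr j)) /implyP; apply.
  by rewrite -ev; move: (Hf (inl ord_max)) => /forallP /(_ (inr j)) /implyP; apply.
by apply/injectiveP => i j; rewrite !ffunE => /injf [].
Qed.

Definition c5 (k : nat) : 'I_5 := Ordinal (ltn_pmod k (isT : 0 < 5)).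

Lemma embC5_le : #|Emb C5_rel E| <=
  \sum_b \sum_c E b c * \sum_a cd a b * cd a c.
Proof.
rewrite (card_key _ (fun f : {ffun 'I_5 -> V} => (f (c5 2), f (c5 3), f (c5 0)))).
have -> : \sum_b \sum_c E b c * \sum_a cd a b * cd a c =
   \sum_b \sum_c \sum_a E b c * (cd a b * cd a c).
  by apply: eq_bigr => b _; apply: eq_bigr => c _; rewrite big_distrr.
rewrite pair_big /= pair_big /=; apply: leq_sum => [[[b c] a]] _ /=.
have [Ebc|nEbc] := boolP (E b c); last first.
  rewrite leqn0 cards_eq0; apply/eqP/setP => f; rewrite !inE.
  apply/negP => /andP [/andP [_ /forallP Hf] /eqP [eb ec ea]].
  move: (Hf (c5 2)) => /forallP /(_ (c5 3)) /implyP.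
  by rewrite eb ec (negbTE nEbc) => /(_ isT).
rewrite mul1n -cardsX.
pose r (f : {ffun 'I_5 -> V}) : V * V := (f (c5 1), f (c5 4)).
rewrite -(@card_in_imset _ _ r); last first.
  move=> f g; rewrite !inE => /andP [_ /eqP ef] /andP [_ /eqP eg] [e1 e4].
  move: ef eg => [<- <- <-] [e2 e3 e0].
  apply/ffunP => i.
  have Hc : forall m (Hm : m < 5), Ordinal Hm = c5 m.
    by move=> m Hm; apply: val_inj; rewrite /= modn_small.
  case: i => [[|[|[|[|[|i]]]]] Hi] //; rewrite Hc //.
apply: subset_leq_card; apply/subsetP => g /imsetP [f]; rewrite !inE.
move=> /andP [/andP [/injectiveP injf /forallP Hf] /eqP [eb ec ea]] ->.
have He : forall i j, C5_rel i j -> E (f i) (f j).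
  by move=> i j; move: (Hf i) => /forallP /(_ j) /implyP.
rewrite /r /= -ea -eb -ec (He (c5 0) (c5 1)) // (He (c5 3) (c5 4)) //.
by rewrite (Esym _ (f (c5 1))) (He (c5 1) (c5 2)) // Esym (He (c5 4) (c5 0)).
Qed.

End Graph.

Definition c2 (k : nat) : 'I_2 := Ordinal (ltn_pmod k (isT : 0 < 2)).
Definition c3 (k : nat) : 'I_3 := Ordinal (ltn_pmod k (isT : 0 < 3)).

Definition fC5 (x : 'I_5 * bool) (i : 'I_5) : 'I_5 := c5 (if x.2 then x.1 + (5 - i) else x.1 + i).
Definition L5 := map c5 (iota 0 5).
Definition L5b := [seq (i, b) | i <- L5, b <- [:: true; false]].

Lemma L5P i : i \in L5.
Proof.
have -> : i = c5 i by apply: val_inj; rewrite /= modn_small.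
by rewrite /L5; apply: map_f; rewrite mem_iota /= ltn_ord.
Qed.

Lemma L5bP x : x \in L5b.
Proof. by case: x => i b; apply/allpairsP; exists (i, b); rewrite L5P; case: b. Qed.

Lemma fC5_b1 : all (fun x => all (fun y => all (fun i => fC5 x i == fC5 y i) L5 ==> (x == y)) L5b) L5b.
Proof. by vm_compute. Qed.
Lemma fC5_b2 : all (fun x => all (fun i => all (fun j => (C5_rel (fC5 x i) (fC5 x j) == C5_rel i j) && ((fC5 x i == fC5 x j) ==> (i == j))) L5) L5) L5b.
Proof. by vm_compute. Qed.

Definition fK (x : 'I_2 * 'I_3 * bool) (v : ('I_2 + 'I_3)%type) : ('I_2 + 'I_3)%type :=
  match v with
  | inl i => inl (c2 (x.1.1 + i))
  | inr j => inr (c3 (if x.2 then x.1.2 + (3 - j) else x.1.2 + j)) end.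
Definition L2 := map c2 (iota 0 2).
Definition L3 := map c3 (iota 0 3).
Definition LK : seq ('I_2 + 'I_3)%type := map inl L2 ++ map inr L3.
Definition LKx := [seq (ij, b) | ij <- [seq (i, j) | i <- L2, j <- L3], b <- [:: true; false]].

Lemma L2P i : i \in L2.
Proof.
have -> : i = c2 i by apply: val_inj; rewrite /= modn_small.
by rewrite /L2; apply: map_f; rewrite mem_iota /= ltn_ord.
Qed.
Lemma L3P i : i \in L3.
Proof.
have -> : i = c3 i by apply: val_inj; rewrite /= modn_small.
by rewrite /L3; apply: map_f; rewrite mem_iota /= ltn_ord.
Qed.
Lemma LKP v : v \in LK.
Proof. by case: v => [i|j]; rewrite mem_cat; apply/orP; [left|right]; apply: map_f; rewrite ?L2P ?L3P. Qed.
Lemma LKxP x : x \in LKx.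
Proof.
case: x => [[i j] b]; rewrite /LKx; apply: (@allpairs_f _ _ _ (fun ij b => (ij, b))).
  by apply: (@allpairs_f _ _ _ pair); rewrite ?L2P ?L3P.
by case: b; rewrite !inE.
Qed.

Lemma fK_b1 : all (fun x => all (fun y => all (fun i => fK x i == fK y i) LK ==> (x == y)) LKx) LKx.
Proof. by vm_compute. Qed.
Lemma fK_b2 : all (fun x => all (fun i => all (fun j => (K23_rel (fK x i) (fK x j) == K23_rel i j) && ((fK x i == fK x j) ==> (i == j))) LK) LK) LKx.
Proof. by vm_compute. Qed.

Section Aut.
Variables (V : finType) (E : rel V).
Hypotheses (Esym : symmetric E) (Eirr : irreflexive E).

Lemma copiesC5_le : #|copies C5_rel E| * 10 <= #|Emb C5_rel E|.
Proof.
pose s (x : 'I_5 * bool) : {ffun 'I_5 -> 'I_5} := [ffun i => fC5 x i].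
have sinj : injective s.
  move=> x y /ffunP H; apply/eqP.
  move/allP: fC5_b1 => /(_ x (L5bP x)) /allP /(_ y (L5bP y)) /implyP; apply.
  by apply/allP => i _; move: (H i); rewrite !ffunE => ->.
have -> : 10 = #|[set s x | x : 'I_5 * bool]|.
  by rewrite card_imset // card_prod card_ord card_bool.
apply: copies_aut => // f /imsetP [x _ ->].
move/allP: fC5_b2 => /(_ x (L5bP x)) Hx; split.
  move=> i j; rewrite !ffunE => /eqP.
  by move/allP: Hx => /(_ i (L5P i)) /allP /(_ j (L5P j)) /andP [_ /implyP H] /H /eqP.
move=> i j; rewrite !ffunE.
by move/allP: Hx => /(_ i (L5P i)) /allP /(_ j (L5P j)) /andP [/eqP].
Qed.

Lemma copiesK23_le : #|copies K23_rel E| * 12 <= #|Emb K23_rel E|.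
Proof.
pose s (x : 'I_2 * 'I_3 * bool) : {ffun ('I_2 + 'I_3)%type -> ('I_2 + 'I_3)%type} := [ffun i => fK x i].
have sinj : injective s.
  move=> x y /ffunP H; apply/eqP.
  move/allP: fK_b1 => /(_ x (LKxP x)) /allP /(_ y (LKxP y)) /implyP; apply.
  by apply/allP => i _; move: (H i); rewrite !ffunE => ->.
have -> : 12 = #|[set s x | x : 'I_2 * 'I_3 * bool]|.
  by rewrite card_imset // !card_prod !card_ord card_bool.
apply: copies_aut => // f /imsetP [x _ ->].
move/allP: fK_b2 => /(_ x (LKxP x)) Hx; split.
  move=> i j; rewrite !ffunE => /eqP.
  by move/allP: Hx => /(_ i (LKP i)) /allP /(_ j (LKP j)) /andP [_ /implyP H] /H /eqP.
move=> i j; rewrite !ffunE.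
by move/allP: Hx => /(_ i (LKP i)) /allP /(_ j (LKP j)) /andP [/eqP].
Qed.

End Aut.

Lemma card_sum (T : finType) (A : {set T}) : #|A| = \sum_x (x \in A).
Proof. by rewrite -sum1_card big_mkcond /=; apply: eq_bigr => x _; case: (x \in A). Qed.

Section Ineq.
Variables (V : finType) (E : rel V).
Hypotheses (Esym : symmetric E) (Eirr : irreflexive E).
Hypothesis Htri : forall x y z, E x y -> E y z -> E z x -> False.

Local Notation Nb := (Nb E).
Local Notation cd := (cd E).
Definition deg u := #|Nb u|.
Definition tnb b c := #|~: (Nb b :|: Nb c)|.

Lemma inNb u w : (w \in Nb u) = E u w.
Proof. by rewrite inE. Qed.

Lemma cd_le u v : cd u v <= deg u.
Proof. by apply: subset_leq_card; apply: subsetIl. Qed.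

Lemma ffact3 x : x ^_ 3 = x * (x.-1 * x.-2).
Proof. by rewrite !ffactnS ffactn0 muln1. Qed.

Lemma ffact3_le x D : x <= D -> x ^_ 3 <= D.-1 * D.-2 * x.
Proof.
move=> h; rewrite ffact3 mulnC; apply: leq_mul => //.
by apply: leq_mul; rewrite -!subn1 ?leq_sub2r // -subnDA leq_sub2r.
Qed.

Lemma D1 u : \sum_v (u != v) * cd u v ^_ 3 <= (deg u).-1 * (deg u).-2 * \sum_v (u != v) * cd u v.
Proof.
rewrite big_distrr; apply: leq_sum => v _ /=.
by case: (u != v); rewrite ?mul0n ?muln0 ?mul1n //; apply: ffact3_le; apply: cd_le.
Qed.

Lemma deg_sum u : deg u = \sum_w E u w.
Proof. by rewrite /deg card_sum; apply: eq_bigr => w _; rewrite inNb. Qed.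

Lemma cd_sum u v : cd u v = \sum_w (E u w && E v w).
Proof. by rewrite /cd card_sum; apply: eq_bigr => w _; rewrite !inE. Qed.

Lemma D2 u : \sum_v (u != v) * cd u v = \sum_w E u w * (deg w).-1.
Proof.
have h1 : \sum_v cd u v = \sum_w E u w * deg w.
  under eq_bigr do rewrite cd_sum.
  rewrite exchange_big /=; apply: eq_bigr => w _.
  rewrite deg_sum big_distrr /=; apply: eq_bigr => v _.
  by rewrite (Esym w v); case: (E u w); case: (E v w).
have h2 : \sum_v cd u v = \sum_v (u != v) * cd u v + deg u.
  rewrite (bigD1 u) //= addnC /cd setIid; congr (_ + _).
  rewrite big_mkcond /=; apply: eq_bigr => v _; rewrite eq_sym.
  by case: (u != v); rewrite ?mul1n ?mul0n.
have h3 : \sum_w E u w * deg w = \sum_w E u w * (deg w).-1 + deg u.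
  rewrite deg_sum -big_split /=; apply: eq_bigr => w _.
  case Euw: (E u w); rewrite ?mul1n ?mul0n // addn1 prednK //.
  by rewrite /deg card_gt0; apply/set0Pn; exists u; rewrite inNb Esym.
by apply/eqP; rewrite -(eqn_add2r (deg u)) -h2 h1 h3.
Qed.

Lemma S1_le : \sum_u \sum_v (u != v) * cd u v ^_ 3 <=
   \sum_u \sum_w E u w * ((deg u).-1 * (deg u).-2 * (deg w).-1).
Proof.
apply: leq_sum => u _; apply: (leq_trans (D1 u)); rewrite D2 big_distrr /=.
apply: leq_sum => w _; case: (E u w); rewrite ?mul0n ?muln0 ?mul1n //.
Qed.

Lemma cd0 a b : E a b -> cd a b = 0.
Proof.
move=> Eab; apply/eqP; rewrite cards_eq0; apply/eqP/setP => w; rewrite !inE.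
apply/negP => /andP [Eaw Ebw]; exact: (Htri Eaw (etrans (Esym w b) Ebw) (etrans (Esym b a) Eab)).
Qed.

Lemma cd_le1 a b c : E b c -> ~~ E a c -> cd a b <= (deg b).-1.
Proof.
move=> Ebc nEac; rewrite /deg (cardsD1 c) inNb Ebc add1n /=.
apply: subset_leq_card; apply/subsetP => w; rewrite !inE => /andP [Eaw ->].
by rewrite andbT; apply/eqP => ewc; move: Eaw; rewrite ewc (negbTE nEac).
Qed.

Lemma D3 b c : E b c -> \sum_a cd a b * cd a c <= tnb b c * ((deg b).-1 * (deg c).-1).
Proof.
move=> Ebc; rewrite /tnb card_sum big_distrl /=; apply: leq_sum => a _.
have [Eba|nEba] := boolP (E b a); first by rewrite cd0 // Esym.
have [Eca|nEca] := boolP (E c a); first by rewrite (cd0 (b := c)) ?muln0 // Esym.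
rewrite in_setC in_setU !inNb (negbTE nEba) (negbTE nEca) mul1n; apply: leq_mul.
  by apply: cd_le1 Ebc _; rewrite Esym.
by apply: (cd_le1 (c := b)); rewrite Esym.
Qed.

Lemma tnb_size b c : E b c -> deg b + deg c + tnb b c = #|V|.
Proof.
move=> Ebc; rewrite /tnb -(cardsC (Nb b :|: Nb c)) cardsU.
suff -> : #|Nb b :&: Nb c| = 0 by rewrite subn0.
exact: cd0.
Qed.

Lemma S2_le : \sum_b \sum_c E b c * \sum_a cd a b * cd a c <=
   \sum_b \sum_c E b c * (tnb b c * ((deg b).-1 * (deg c).-1)).
Proof.
apply: leq_sum => b _; apply: leq_sum => c _.
by case Ebc: (E b c); rewrite ?mul0n // !mul1n; apply: D3.
Qed.

Definition psi b c := 5 * ((deg b).-1 * (deg b).-2 * (deg c).-1) + 6 * (tnb b c * ((deg b).-1 * (deg c).-1)).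

Lemma S12_le : 5 * (\sum_u \sum_v (u != v) * cd u v ^_ 3) +
               6 * (\sum_b \sum_c E b c * \sum_a cd a b * cd a c) <=
               \sum_b \sum_c E b c * psi b c.
Proof.
apply: (leq_trans (leq_add (leq_mul (leqnn 5) S1_le) (leq_mul (leqnn 6) S2_le))).
rewrite !big_distrr -big_split /=; apply: leq_sum => b _.
rewrite !big_distrr -big_split /=; apply: leq_sum => c _.
by rewrite /psi mulnDr !mulnA (mulnC 5) (mulnC 6).
Qed.

Lemma psi_sym : \sum_b \sum_c E b c * psi b c = \sum_b \sum_c E b c * psi c b.
Proof.
rewrite exchange_big /=; apply: eq_bigr => b _; apply: eq_bigr => c _.
by rewrite Esym.
Qed.

Lemma sum_deg : \sum_b \sum_c (E b c : nat) = \sum_b deg b.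
Proof. by apply: eq_bigr => b _; rewrite deg_sum. Qed.

Lemma S12_M M : (forall b c, E b c -> psi b c + psi c b <= M) ->
   2 * (\sum_b \sum_c E b c * psi b c) <= M * \sum_b deg b.
Proof.
move=> HM; rewrite mul2n -addnn {2}psi_sym -big_split /= -sum_deg big_distrr /=.
apply: leq_sum => b _; rewrite -big_split big_distrr /=; apply: leq_sum => c _.
by case Ebc: (E b c); rewrite ?mul0n ?muln0 // !mul1n muln1; apply: HM.
Qed.

Lemma mantel : exists2 D, D <= #|V| & \sum_b deg b <= 2 * ((#|V| - D) * D).
Proof.
have [V0|Vpos] := posnP #|V|.
  exists 0 => //; rewrite big_pred0 // => i.
  by have := card0_eq V0 i; rewrite inE.
have [u0 Hu0] := eq_bigmax deg Vpos.
exists (deg u0); first exact: max_card.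
have degle b : deg b <= deg u0 by rewrite -Hu0; apply: leq_bigmax.
set N := Nb u0.
have step : \sum_b deg b <= \sum_b \sum_c E b c * ((b \notin N) + (c \notin N)).
  rewrite -sum_deg; apply: leq_sum => b _; apply: leq_sum => c _.
  case Ebc: (E b c) => //; rewrite mul1n.
  case bN: (b \in N); case cN: (c \in N) => //=.
  exfalso; move: bN cN; rewrite !inNb => Eub Euc.
  by apply: (Htri Eub Ebc); rewrite Esym.
apply: (leq_trans step).
have h1 : \sum_b \sum_c E b c * (b \notin N) <= (#|V| - deg u0) * deg u0.
  have -> : #|V| - deg u0 = #|~: N| by rewrite -(cardsC N) addKn.
  rewrite card_sum big_distrl /=; apply: leq_sum => b _.
  rewrite in_setC; case: (b \in N) => /=.
    by rewrite big1 // => c _; rewrite muln0.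
  rewrite mul1n (eq_bigr (fun c => E b c : nat)) => [|c _]; last by rewrite muln1.
  by rewrite -deg_sum degle.
have h2 : \sum_b \sum_c E b c * (c \notin N) = \sum_b \sum_c E b c * (b \notin N).
  rewrite exchange_big /=; apply: eq_bigr => b _; apply: eq_bigr => c _; by rewrite Esym.
have -> : \sum_b \sum_c E b c * ((b \notin N) + (c \notin N)) =
   \sum_b \sum_c E b c * (b \notin N) + \sum_b \sum_c E b c * (c \notin N).
  rewrite -big_split /=; apply: eq_bigr => b _; rewrite -big_split /=.
  by apply: eq_bigr => c _; rewrite mulnDr.
by rewrite h2 addnn -mul2n leq_mul2l h1.
Qed.

End Ineq.

Section FK.
Variables (V : finType) (x0 : V).

Definition fKT (U X : {set V}) : {ffun ('I_2 + 'I_3)%type -> V} :=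
  [ffun v : ('I_2 + 'I_3)%type => match v with inl i => nth x0 (enum U) i | inr j => nth x0 (enum X) j end].

Lemma nth_enum_in (U : {set V}) k i : #|U| = k -> i < k -> nth x0 (enum U) i \in U.
Proof. by move=> hU hi; rewrite -mem_enum mem_nth // -cardE hU. Qed.

Lemma nth_enum_inj (U : {set V}) k i j : #|U| = k -> i < k -> j < k ->
  nth x0 (enum U) i = nth x0 (enum U) j -> i = j.
Proof.
move=> hU hi hj /eqP; rewrite nth_uniq ?enum_uniq // -?cardE ?hU //.
by move/eqP.
Qed.

Lemma nth_enum_surj (U : {set V}) u : u \in U -> exists2 i, i < #|U| & u = nth x0 (enum U) i.
Proof.
move=> uU; exists (index u (enum U)); first by rewrite cardE index_mem mem_enum.
by rewrite nth_index // mem_enum.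
Qed.

Variables (U X : {set V}).
Hypotheses (hU : #|U| = 2) (hX : #|X| = 3) (hUX : [disjoint U & X]).

Lemma fK_inl i : fKT U X (inl i) \in U.
Proof. by rewrite ffunE; apply: nth_enum_in hU (ltn_ord i). Qed.
Lemma fK_inr j : fKT U X (inr j) \in X.
Proof. by rewrite ffunE; apply: nth_enum_in hX (ltn_ord j). Qed.

Lemma fK_inj : injective (fKT U X).
Proof.
have dis u : u \in U -> u \in X -> False.
  by move=> uU uX; move: hUX; rewrite disjoints_subset => /subsetP /(_ u uU); rewrite inE uX.
move=> [i|j] [i'|j'] e.
- by congr inl; apply: val_inj; move: e; rewrite !ffunE => /(nth_enum_inj hU (ltn_ord i) (ltn_ord i')).
- by exfalso; apply: (dis _ (fK_inl i)); rewrite e fK_inr.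
- by exfalso; apply: (dis _ (fK_inl i')); rewrite -e fK_inr.
- by congr inr; apply: val_inj; move: e; rewrite !ffunE => /(nth_enum_inj hX (ltn_ord j) (ltn_ord j')).
Qed.

Lemma fK_img : fKT U X @: [set: ('I_2 + 'I_3)%type] = U :|: X.
Proof.
apply/setP => w; rewrite inE; apply/imsetP/orP.
  by move=> [[i|j] _ ->]; [left; apply: fK_inl | right; apply: fK_inr].
move=> [wU|wX].
  have [i hi ->] := nth_enum_surj wU; rewrite hU in hi.
  by exists (inl (Ordinal hi)); rewrite ?inE // ffunE.
have [j hj ->] := nth_enum_surj wX; rewrite hX in hj.
by exists (inr (Ordinal hj)); rewrite ?inE // ffunE.
Qed.

End FK.

Section T2.
Variables (n : nat) (x0 : 'I_n).
Local Notation h := (n./2).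
Definition Aset : {set 'I_n} := [set i : 'I_n | i < h].
Definition Bset : {set 'I_n} := ~: Aset.
Definition Sk (A : {set 'I_n}) k := [set U : {set 'I_n} | U \subset A & #|U| == k].
Definition DD1 := setX (Sk Aset 2) (Sk Bset 3).
Definition DD2 := setX (Sk Bset 2) (Sk Aset 3).

Lemma h_le : h <= n.
Proof. by rewrite leq_half_double; apply: leqW; rewrite -addnn leq_addr. Qed.

Lemma card_Aset : #|Aset| = h.
Proof.
have winj : injective (widen_ord h_le) by move=> i j e; apply: val_inj; exact: (congr1 val e).
rewrite -[RHS]card_ord -(card_imset _ winj); apply: eq_card => i.
rewrite inE; apply/idP/imsetP => [hi|[j _ ->]] //=.
by exists (Ordinal hi) => //; apply: val_inj.
Qed.

Lemma card_Bset : #|Bset| = n - h.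
Proof.
have e := cardsC Aset; rewrite card_Aset in e.
rewrite /Bset; apply/eqP; rewrite -(eqn_add2l h) subnKC ?h_le // e; apply/eqP; exact: card_ord.
Qed.

Lemma card_Sk A k : #|Sk A k| = 'C(#|A|, k).
Proof. exact: cards_draws. Qed.

Lemma SkP A k U : (U \in Sk A k) = (U \subset A) && (#|U| == k).
Proof. by rewrite inE. Qed.

Lemma D12_dis : [disjoint DD1 & DD2].
Proof.
rewrite -setI_eq0; apply/eqP/setP => [[U X]]; rewrite !inE.
apply/negP => /andP [/andP [/andP [UA /eqP U2] _] /andP [/andP [UB _] _]].
have : U \subset Aset :&: Bset by rewrite subsetI UA UB.
rewrite setICr subset0 => /eqP U0; by rewrite U0 cards0 in U2.
Qed.

Definition phi (p : {set 'I_n} * {set 'I_n}) := piF K23_rel (fKT x0 p.1 p.2).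

Definition rho (W : {set 'I_n}) :=
  if #|W :&: Aset| == 2 then (W :&: Aset, W :&: Bset) else (W :&: Bset, W :&: Aset).

Lemma D12_props p : p \in DD1 :|: DD2 ->
  [/\ #|p.1| = 2, #|p.2| = 3, [disjoint p.1 & p.2],
      forall u x, u \in p.1 -> x \in p.2 -> T2_rel n u x && T2_rel n x u
    & rho (p.1 :|: p.2) = p].
Proof.
case: p => U X; rewrite !inE /= => /orP [] /andP [/andP [UA /eqP U2] /andP [XB /eqP X3]].
- have dis : [disjoint U & X].
    by rewrite disjoint_sym disjoints_subset; apply: (subset_trans XB); rewrite /Bset setCS.
  split => //.
    move=> u x uU xX; move: (subsetP UA u uU) (subsetP XB x xX); rewrite /Bset !inE.
    by rewrite /T2_rel => -> /negbTE ->.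
  have e1 : (U :|: X) :&: Aset = U.
    apply/setP => w; rewrite in_setI in_setU; apply/idP/idP.
      case/andP => /orP [wU|wX] wA //.
      by move: (subsetP XB w wX); rewrite /Bset in_setC wA.
    by move=> wU; rewrite wU (subsetP UA w wU).
  have e2 : (U :|: X) :&: Bset = X.
    apply/setP => w; rewrite in_setI in_setU; apply/idP/idP.
      case/andP => /orP [wU|wX] wB //.
      by move: wB; rewrite /Bset in_setC (subsetP UA w wU).
    by move=> wX; rewrite wX orbT (subsetP XB w wX).
  by rewrite /rho e1 U2 eqxx e2.
- have dis : [disjoint U & X].
    by rewrite disjoints_subset; apply: (subset_trans UA); rewrite /Bset setCS.
  split => //.
    move=> u x uU xX; move: (subsetP UA u uU) (subsetP XB x xX); rewrite /Bset !inE.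
    by rewrite /T2_rel => /negbTE -> ->.
  have e1 : (U :|: X) :&: Aset = X.
    apply/setP => w; rewrite in_setI in_setU; apply/idP/idP.
      case/andP => /orP [wU|wX] wA //.
      by move: (subsetP UA w wU); rewrite /Bset in_setC wA.
    by move=> wX; rewrite wX orbT (subsetP XB w wX).
  have e2 : (U :|: X) :&: Bset = U.
    apply/setP => w; rewrite in_setI in_setU; apply/idP/idP.
      case/andP => /orP [wU|wX] wB //.
      by move: wB; rewrite /Bset in_setC (subsetP XB w wX).
    by move=> wU; rewrite wU (subsetP UA w wU).
  by rewrite /rho e1 X3 /= e2.
Qed.

Lemma phi_copies p : p \in DD1 :|: DD2 -> phi p \in copies K23_rel (T2_rel n).
Proof.
move=> /D12_props [U2 X3 dis Hux _]; apply: piF_copies.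
rewrite inE; apply/andP; split; first by apply/injectiveP; apply: fK_inj U2 X3 dis.
apply/forallP => x; apply/forallP => y; apply/implyP.
case: x => [i|j]; case: y => [i'|j'] // _.
  by case/andP: (Hux _ _ (fK_inl x0 p.2 U2 i) (fK_inr x0 p.1 X3 j')).
by case/andP: (Hux _ _ (fK_inl x0 p.2 U2 i') (fK_inr x0 p.1 X3 j)).
Qed.

Lemma phi1 p : p \in DD1 :|: DD2 -> (phi p).1 = p.1 :|: p.2.
Proof. by move=> /D12_props [U2 X3 dis _ _]; rewrite /phi /piF /= (fK_img x0 U2 X3). Qed.

Lemma T2_lower : 'C(h, 2) * 'C(n - h, 3) + 'C(n - h, 2) * 'C(h, 3) <= #|copies K23_rel (T2_rel n)|.
Proof.
have -> : 'C(h, 2) * 'C(n - h, 3) + 'C(n - h, 2) * 'C(h, 3) = #|DD1 :|: DD2|.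
  rewrite cardsU (disjoint_setI0 D12_dis) cards0 subn0 /DD1 /DD2 !cardsX !card_Sk.
  by rewrite card_Aset card_Bset.
rewrite -(@card_in_imset _ _ phi); last first.
  move=> p q pD qD e.
  have [_ _ _ _ <-] := D12_props pD; have [_ _ _ _ <-] := D12_props qD.
  by rewrite -phi1 // -phi1 // e.
apply: subset_leq_card; apply/subsetP => c /imsetP [p pD ->]; exact: phi_copies.
Qed.

End T2.

Lemma abZ (m D a o : Z) : (0 <= m)%Z -> (0 <= D)%Z -> (0 <= o <= 1)%Z -> (m + D = 2 * a + o)%Z ->
  (m * D <= a * (a + o))%Z.
Proof.
intros hm hD ho hs.
assert (hm' : m = (2 * a + o - D)%Z) by lia. subst m.
assert (Eq : ((2 * a + o - D) * D = a * (a + o) - (a - D) * (a + o - D))%Z) by ring.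
rewrite Eq.
destruct (Z_le_gt_dec D a) as [h|h].
- assert (0 <= (a - D) * (a + o - D))%Z by (apply Z.mul_nonneg_nonneg; lia). lia.
- assert (0 <= (D - a) * (D - a - o))%Z by (apply Z.mul_nonneg_nonneg; lia).
  assert (Eq2 : ((a - D) * (a + o - D) = (D - a) * (D - a - o))%Z) by ring. lia.
Qed.

Lemma ab_le (n D : nat) : D <= n -> (n - D) * D <= n./2 * (n - n./2).
Proof.
move=> hD.
have [o [hao hNo]] : exists o, o <= 1 /\ o + (n./2).*2 = n.
  by exists (odd n); split; [case: (odd n) | exact: odd_double_half].
set a := n./2 in hNo *.
have -> : n - a = a + o by lia.
have [m em] : exists m, n - D = m by exists (n - D).
rewrite em.
have hs : m + D = 2 * a + o by lia.
have := @abZ (Z.of_nat m) (Z.of_nat D) (Z.of_nat a) (Z.of_nat o).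
lia.
Qed.

Lemma bin2E x : 'C(x, 2) * 2 = x * x.-1.
Proof. by rewrite (bin_ffact x 2) !ffactnS ffactn0 muln1. Qed.
Lemma bin3E x : 'C(x, 3) * 6 = x * (x.-1 * x.-2).
Proof. by rewrite (bin_ffact x 3) !ffactnS ffactn0 muln1. Qed.

Lemma Tf_eq a b : 12 * ('C(a,2)*'C(b,3) + 'C(b,2)*'C(a,3)) = a * a.-1 * (b * b.-1) * (a.-2 + b.-2).
Proof.
have e1 x y : 12 * ('C(x,2) * 'C(y,3)) = ('C(x,2) * 2) * ('C(y,3) * 6).
  by move: (binomial x 2) (binomial y 3) => u v; lia.
rewrite mulnDr !e1 !bin2E !bin3E.
move: (a.-1) (a.-2) (b.-1) (b.-2) => a1 a2 b1 b2.
lia.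
Qed.

Lemma upper n (E : rel 'I_n) : symmetric E -> irreflexive E ->
  (forall x y z, E x y -> E y z -> E z x -> False) ->
  60 * (#|copies K23_rel E| + #|copies C5_rel E|) <= Bn n * (n./2 * (n - n./2)).
Proof.
move=> Esym Eirr Htri.
have hK := leq_trans (copiesK23_le Esym Eirr) (embK23_le E).
have hC := leq_trans (copiesC5_le Esym Eirr) (embC5_le Esym).
have h12 := S12_le Esym Htri.
have HM : forall b c, E b c -> psi E b c + psi E c b <= Bn n.
  move=> b c Ebc.
  have ht : tnb E c b = tnb E b c by rewrite /tnb setUC.
  rewrite /psi ht; apply: NL.
  - by rewrite (tnb_size Esym Htri Ebc) card_ord.
  - by rewrite /deg card_gt0; apply/set0Pn; exists c; rewrite inNb.
  - by rewrite /deg card_gt0; apply/set0Pn; exists b; rewrite inNb Esym.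
have hM := S12_M Esym HM.
have [D hD hman] := mantel Esym Htri.
rewrite card_ord in hD hman.
have hab := ab_le hD.
have h3 : Bn n * \sum_b deg E b <= Bn n * (2 * (n./2 * (n - n./2))).
  by rewrite leq_mul2l; apply/orP; right; apply: (leq_trans hman); rewrite leq_mul2l hab orbT.
move: hK hC h12 hM h3.
set S1 := \sum_u \sum_v _.
set S2 := \sum_b \sum_c _ * _.
set X := \sum_b \sum_c _.
lia.
Qed.

Lemma T2_simple n : simple_graph (T2_rel n).
Proof.
unfold simple_graph; apply/andP; split.
  by apply/forallP => x; rewrite /T2_rel eqxx.
by apply/forallP => x; apply/forallP => y; rewrite /T2_rel; case: (x < n./2); case: (y < n./2).
Qed.

Lemma T2_tf n : triangle_free (T2_rel n).
Proof.
rewrite /triangle_free /=; apply/negP => /existsP [x /existsP [y /existsP [z]]].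
rewrite /T2_rel.
by case: (x < n./2); case: (y < n./2); case: (z < n./2).
Qed.

Lemma final_arith n K C T : 60 * (K + C) <= Bn n * (n./2 * (n - n./2)) ->
  (0 < n -> 'C(n./2, 2) * 'C(n - n./2, 3) + 'C(n - n./2, 2) * 'C(n./2, 3) <= T) ->
  K + C <= T.
Proof.
move=> hu hT.
have [o [hao hNo]] : exists o, o <= 1 /\ o + (n./2).*2 = n.
  by exists (odd n); split; [case: (odd n) | exact: odd_double_half].
have [n0|npos] := posnP n.
  subst n; move: hu; rewrite /Bn /= muln0; lia.
move: hu (hT npos); rewrite /Bn.
case: eqP => [n5|n5].
  subst n => hu hT'; have e : 'C(5./2, 2) * 'C(5 - 5./2, 3) + 'C(5 - 5./2, 2) * 'C(5./2, 3) = 1 by [].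
  have e2 : 12 * (5./2 * (5 - 5./2)) = 72 by [].
  rewrite e in hT'; rewrite e2 in hu; lia.
set a := n./2 in hNo *.
have eb : n - a = a + o by lia.
rewrite eb => hu hT'.
have h12 := Tf_eq a (a + o).
have [a1|a2] := leqP a 1.
  have a0 : a.-1 = 0 by lia.
  move: hu; rewrite a0; lia.
have e4 : n - 4 = a.-2 + (a + o).-2 by lia.
move: hu h12 hT'; rewrite e4.
move: (a.-1) (a.-2) ((a + o).-1) ((a + o).-2) => a1 a2' b1 b2 hu h12 hT'.
lia.
Qed.

Theorem mainTheorem13 (n : nat) :
  ex_K23_C5 n = numcopies K23_rel (T2_rel n) + numcopies C5_rel (T2_rel n).
Proof.
apply/eqP; rewrite eqn_leq; apply/andP; split.
  apply/bigmax_leqP => S /andP [/andP [/forallP Hirr /forallP Hsym] htf].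
  set E := rel_of_set S.
  have Esym : symmetric E by move=> x y; apply/eqP; move: (Hsym x) => /forallP.
  have Eirr : irreflexive E by move=> x; apply/negbTE.
  have Htri : forall x y z, E x y -> E y z -> E z x -> False.
    move=> x y z Exy Eyz Ezx; move/negP: htf; apply.
    by apply/existsP; exists x; apply/existsP; exists y; apply/existsP; exists z; apply/and3P; split; [exact: Exy | exact: Eyz | exact: Ezx].
  have hu := upper Esym Eirr Htri.
  rewrite /numcopies; apply: (@leq_trans #|copies K23_rel (T2_rel n)|); last exact: leq_addr.
  apply: final_arith hu _ => npos.
  exact: (T2_lower (Ordinal npos)).
pose S0 := [set p : 'I_n * 'I_n | T2_rel n p.1 p.2].
have eS0 : rel_of_set S0 = T2_rel n.
  apply: functional_extensionality => x; apply: functional_extensionality => y.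
  by rewrite /rel_of_set inE.
rewrite /ex_K23_C5 -eS0; apply: (@leq_bigmax_cond _ _ _ S0).
by rewrite eS0 T2_simple T2_tf.
Qed.
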